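(* Let $X=\{0,1\}$ and $k\ge2$. The classes $\mathcal A_k$ and $\mathcal R_k$ of aperiodic and of regular $k$-partitions of $X^\omega$ are each closed under the unary operations $q_0,\ldots,q_{k-1}$ and the binary operation $\cdot$.
   Context: $\mathcal R_k$ ($\mathcal A_k$): functions $X^\omega\to\bar k=\{0,\dots,k-1\}$ all of whose preimages are regular (aperiodic) $\omega$-languages (recognised by deterministic Muller acceptors, resp. with aperiodic automaton). Let $\tilde0=110000$, $\tilde1=110100$, $\tilde2=110010$ and $f:\{0,1,2\}^\omega\to\{0,1\}^\omega$, $f(x_0x_1\cdots)=\tilde x_0\tilde x_1\cdots$. For $A:X^\omega\to\bar k$ and $i<k$, $q_i(A)(\xi)=i$ if $\xi\notin f(\{0,1,2\}^\omega)$ or $\xi[n,n+6)=\tilde 2$ for infinitely many $n$; $q_i(A)(\xi)=A(\eta)$ if $\xi=f(\eta)$ with $\eta\in\{0,1\}^\omega$; $q_i(A)(\xi)=A(\eta)$ if $\xi=f(\sigma2\eta)$ with $\sigma\in\{0,1,2\}^*$ and $\eta\in\{0,1\}^\omega$. Let $g:X^\omega\to X^\omega$, $g(x_0x_1\cdots)=\tilde x_0\tilde2\tilde x_1\tilde2\cdots$ (and similarly on finite words). For $A,B:X^\omega\to\bar k$: $(A\cdot B)(\xi)=A(\eta)$ if $\xi=g(\eta)$; and $(A\cdot B)(\xi)=B(\eta)$ if $\xi=g(u)\,v\,\eta$ with $u\in X^*$, $\eta\in X^\omega$, and $v\in X^+$ the shortest word with $g(u)vX^\omega\cap g(X^\omega)=\emptyset$.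 *)

(* Defs.v *)
From mathcomp Require Import all_boot.
From Stdlib Require Import ClassicalEpsilon.

Set Implicit Arguments.
Unset Strict Implicit.
Unset Printing Implicit Defensive.

(* The alphabet X = {0,1} is [bool] (false = 0, true = 1);
   infinite words X^omega are functions nat -> bool. *)
Definition word := nat -> bool.
Set Warnings "-notation-overridden".

Record muller := Muller {
  mst : finType;
  minit : mst;
  mdelta : mst -> bool -> mst;
  macc : {set {set mst}}
}.

Fixpoint run (M : muller) (xi : word) (n : nat) : mst M :=
  match n with
  | 0 => minit M
  | n'.+1 => mdelta (run M xi n') (xi n')
  end.

Definition inf_often (M : muller) (xi : word) (q : mst M) : Prop :=
  forall N, exists n, N <= n /\ run M xi n = q.

Definition accepts (M : muller) (xi : word) : Prop :=
  exists2 S, S \in macc M & forall q, q \in S <-> @inf_often M xi q.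

Definition delta_star (M : muller) (q : mst M) (u : seq bool) : mst M :=
  foldl (@mdelta M) q u.

(* the automaton (transition structure) is aperiodic: its transition monoid
   is aperiodic, i.e. u^n and u^(n+1) act identically for some n. *)
Definition aperiodic_aut (M : muller) : Prop :=
  exists n, forall (u : seq bool) (q : mst M),
    delta_star q (flatten (nseq n u)) = delta_star q (flatten (nseq n.+1 u)).

Definition regular_lang (L : word -> Prop) : Prop :=
  exists M : muller, forall xi, L xi <-> accepts M xi.

Definition aperiodic_lang (L : word -> Prop) : Prop :=
  exists M : muller, aperiodic_aut M /\ forall xi, L xi <-> accepts M xi.

Definition kpart (k : nat) := word -> 'I_k.

Definition R_class (k : nat) (A : kpart k) : Prop :=
  forall i : 'I_k, regular_lang (fun xi => A xi = i).

Definition A_class (k : nat) (A : kpart k) : Prop :=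
  forall i : 'I_k, aperiodic_lang (fun xi => A xi = i).

Definition two3 : 'I_3 := @Ordinal 3 2 isT.
Definition bit3 (b : bool) : 'I_3 := @inord 2 (nat_of_bool b).

Definition tilde (a : 'I_3) : seq bool :=
  match val a with
  | 0 => [:: true; true; false; false; false; false]
  | 1 => [:: true; true; false; true; false; false]
  | _ => [:: true; true; false; false; true; false]
  end.

(* f : {0,1,2}^omega -> {0,1}^omega, f(x0 x1 ...) = tilde x0 tilde x1 ... *)
Definition f_code (zeta : nat -> 'I_3) : word :=
  fun n => nth false (tilde (zeta (n %/ 6))) (n %% 6).

Definition prepend (T : Type) (s : seq T) (w : nat -> T) : nat -> T :=
  fun n => if n < size s then nth (w 0) s n else w (n - size s).

Definition factor6 (xi : word) (n : nat) : seq bool := mkseq (fun j => xi (n + j)) 6.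

Definition q_case1 (xi : word) : Prop :=
  ~ (exists zeta : nat -> 'I_3, xi =1 f_code zeta)
  \/ (forall N, exists n, N <= n /\ factor6 xi n = tilde two3).

Definition q_case2 (xi : word) (eta : word) : Prop :=
  xi =1 f_code (fun n => bit3 (eta n)).

Definition q_case3 (xi : word) (eta : word) : Prop :=
  exists sigma : seq 'I_3,
    xi =1 f_code (prepend (rcons sigma two3) (fun n => bit3 (eta n))).

(* q_i(A).  The three cases are exhaustive and the chosen eta is unique,
   so the final fallback branch is never reached. *)
Definition q_op (k : nat) (i : 'I_k) (A : kpart k) : kpart k :=
  fun xi =>
  match excluded_middle_informative (q_case1 xi) with
  | left _ => i
  | right _ =>
    match excluded_middle_informative (exists eta, q_case2 xi eta) with
    | left H => A (proj1_sig (constructive_indefinite_description _ H))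
    | right _ =>
      match excluded_middle_informative (exists eta, q_case3 xi eta) with
      | left H => A (proj1_sig (constructive_indefinite_description _ H))
      | right _ => i
      end
    end
  end.

(* g : X^omega -> X^omega, g(x0 x1 ...) = tilde x0 tilde 2 tilde x1 tilde 2 ... *)
Definition g_code (eta : word) : word :=
  fun n =>
    let r := n %% 12 in
    if r < 6 then nth false (tilde (bit3 (eta (n %/ 12)))) r
    else nth false (tilde two3) (r - 6).

Definition g_fin (u : seq bool) : seq bool :=
  flatten [seq tilde (bit3 b) ++ tilde two3 | b <- u].

Definition g_bad (w : seq bool) : Prop :=
  forall zeta : word, ~ (forall j, j < size w -> g_code zeta j = nth false w j).

Definition dot_case2 (xi : word) (eta : word) : Prop :=
  exists (u v : seq bool),
    [/\ v != [::],
        xi =1 prepend (g_fin u ++ v) eta,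
        g_bad (g_fin u ++ v)
      & forall m, m < size v -> ~ g_bad (g_fin u ++ take m v)].

(* (A . B).  The cases are exhaustive and eta is uniquely determined, so the
   fallback branch is never reached. *)
Definition dot_op (k : nat) (A B : kpart k) : kpart k :=
  fun xi =>
  match excluded_middle_informative (exists eta, xi =1 g_code eta) with
  | left H => A (proj1_sig (constructive_indefinite_description _ H))
  | right _ =>
    match excluded_middle_informative (exists eta, dot_case2 xi eta) with
    | left H => B (proj1_sig (constructive_indefinite_description _ H))
    | right _ => A (fun _ => false)
    end
  end.

(* Main.v *)
Require Import Defs.
From mathcomp Require Import all_boot zify.
From Stdlib Require Import ClassicalEpsilon Classical FunctionalExtensionality.
Set Warnings "-notation-overridden".
Set Implicit Arguments. Unset Strict Implicit. Unset Printing Implicit Defensive.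

Lemma run_ext (M : muller) (xi xi' : word) n :
  (forall j, j < n -> xi j = xi' j) -> run M xi n = run M xi' n.
Proof.
elim: n => [//|n IH] H /=; rewrite IH ?H // => j Hj; apply: H; exact: ltnW.
Qed.

Lemma run_shift (M : muller) (xi : word) n j :
  run M xi (n + j) = delta_star (run M xi n) (mkseq (fun t => xi (n + t)) j).
Proof.
elim: j => [|j IH]; first by rewrite addn0.
rewrite addnS; change (run M xi (n+j).+1) with (mdelta (run M xi (n+j)) (xi (n+j))).
by rewrite IH mkseqS /delta_star foldl_rcons.
Qed.

Lemma run_ds (M : muller) (xi : word) n : run M xi n = delta_star (minit M) (mkseq xi n).
Proof. by rewrite -[n]add0n run_shift. Qed.

Definition infb (M : muller) (xi : word) (q : mst M) : bool :=
  if excluded_middle_informative (inf_often xi q) then true else false.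

Lemma infbP (M : muller) xi q : infb xi q <-> @inf_often M xi q.
Proof. by rewrite /infb; case: excluded_middle_informative. Qed.

Definition infset (M : muller) xi : {set mst M} := [set q | infb xi q].

Lemma acc_infset (M : muller) xi : accepts M xi <-> infset M xi \in macc M.
Proof.
split.
- case=> S HS H; suff -> : infset M xi = S by [].
  apply/setP => q; rewrite inE; apply/idP/idP => h.
  + by apply/H/infbP.
  + by apply/infbP/H.
- move=> H; exists (infset M xi) => // q; rewrite inE; split; by move/infbP.
Qed.

Lemma pigeon (T : finType) (r : nat -> T) (p : pred T) :
  (forall N, exists n, N <= n /\ p (r n)) ->
  exists q, p q /\ forall N, exists n, N <= n /\ r n = q.
Proof.
move=> H; apply: NNPP => Hn.
have Hb : forall q, p q -> exists N, forall n, N <= n -> r n <> q.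
  move=> q pq; apply: NNPP => H2; apply: Hn; exists q; split => // N.
  apply: NNPP => H3; apply: H2; exists N => n Nn rq; apply: H3; by exists n.
have : forall s : seq T, exists N, forall n, N <= n -> ~~ ((r n \in s) && p (r n)).
  elim=> [|x s [N HN]]; first by exists 0.
  case: (boolP (p x)) => px.
  - case: (Hb x px) => N2 HN2; exists (maxn N N2) => n Hn0.
    have h1 := HN n (leq_trans (leq_maxl _ _) Hn0).
    have h2 := HN2 n (leq_trans (leq_maxr _ _) Hn0).
    rewrite in_cons; case: (r n =P x) => [e|_] //=.
  - exists N => n Hn0; rewrite in_cons; case: (r n =P x) => [->|_] /=.
    + by rewrite (negbTE px).
    + exact: HN n Hn0.
case/(_ (enum T)) => N HN; case: (H N) => n [Nn pn].
by move: (HN n Nn); rewrite mem_enum pn.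
Qed.

Lemma ex_inf (C : muller) xi (p : pred (mst C)) :
  (exists2 q, q \in infset C xi & p q) <-> (forall N, exists n, N <= n /\ p (run C xi n)).
Proof.
split.
- case=> q; rewrite inE => /infbP Hq pq N; case: (Hq N) => n [Nn e]; exists n; by rewrite e.
- move/pigeon => [q [pq Hq]]; exists q => //; rewrite inE; exact/infbP.
Qed.

Lemma proj_inf (M C : muller) (xi eta : word) (pi : mst C -> option (mst M)) N c L :
  0 < L -> (forall n, N <= n -> pi (run C xi n) = Some (run M eta ((n - c) %/ L))) ->
  forall a, (exists2 q, q \in infset C xi & pi q = Some a) <-> a \in infset M eta.
Proof.
move=> L0 H a; split.
- case=> q; rewrite inE => /infbP Hq pq; rewrite inE; apply/infbP => N'.
  case: (Hq (maxn N (c + N' * L))) => n [Nn e].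
  exists ((n - c) %/ L); split.
  + rewrite leq_divRL //; have := leq_trans (leq_maxr _ _) Nn; lia.
  + by move: (H n (leq_trans (leq_maxl _ _) Nn)); rewrite e pq => -[].
- rewrite inE => /infbP Ha.
  have : forall N', exists n, N' <= n /\ pi (run C xi n) == Some a.
    move=> N'; case: (Ha (maxn N' N)) => m [Nm e]; exists (c + m * L); split.
    + have := leq_maxl N' N; nia.
    + rewrite H; first by rewrite addKn mulnK // e.
      have := leq_maxr N' N; nia.
  by move/(@ex_inf C xi (fun q => pi q == Some a)) => [q qi /eqP pq]; exists q.
Qed.

Lemma mkseq_add T (f : nat -> T) n j : mkseq f (n + j) = mkseq f n ++ mkseq (fun t => f (n + t)) j.
Proof. by rewrite /mkseq iotaD map_cat add0n -[in iota n j](addn0 n) iotaDl -map_comp. Qed.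

Lemma take_mkseq T (f : nat -> T) r n : r <= n -> take r (mkseq f n) = mkseq f r.
Proof. by move=> rn; rewrite -(subnKC rn) mkseq_add take_size_cat // size_mkseq. Qed.

Lemma mkseq_ext T (f g : nat -> T) n : (forall j, j < n -> f j = g j) -> mkseq f n = mkseq g n.
Proof. by move=> H; apply/eq_in_map => j; rewrite mem_iota add0n => /andP [_ /H]. Qed.

Definition DS := option (nat * seq bool).
Definition pre (w c : seq bool) := take (size w) c == w.

Lemma pre_cat u v c : pre (u ++ v) c -> pre u c.
Proof.
rewrite /pre size_cat => /eqP e; apply/eqP.
by rewrite -[RHS](take_size_cat v (erefl _)) -e take_takel ?leq_addr.
Qed.

Inductive Act := Nop | Let of bool | Reset.

Section Dec.
Variables (L : nat) (codes : seq (seq bool)) (l0 : nat).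

Definition step (x : DS) (b : bool) : DS :=
  if x is Some (l, p) then
    if has (pre (rcons p b)) codes then
      (if size (rcons p b) == L then Some (index (rcons p b) codes, [::]) else Some (l, rcons p b))
    else None
  else None.

Definition dinit : DS := Some (l0, [::]).
Definition rs (xi : word) n := foldl step dinit (mkseq xi n).
Definition blk (xi : word) m := mkseq (fun j => xi (m * L + j)) L.
Definition lastc (xi : word) m := if m is m'.+1 then index (blk xi m') codes else l0.

Hypothesis HL : 0 < L.
Hypothesis Hc : all (fun c => size c == L) codes.
Hypothesis Hne : 0 < size codes.

Lemma rsS xi n : rs xi n.+1 = step (rs xi n) (xi n).
Proof. by rewrite /rs mkseqS foldl_rcons. Qed.

Lemma rs_add xi n j : rs xi (n + j) = foldl step (rs xi n) (mkseq (fun t => xi (n+t)) j).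
Proof. by rewrite /rs mkseq_add foldl_cat. Qed.

Lemma foldl_None w : foldl step None w = None.
Proof. by elim: w. Qed.

Lemma rs_dead xi n n' : rs xi n = None -> n <= n' -> rs xi n' = None.
Proof. by move=> H /subnKC <-; rewrite rs_add H foldl_None. Qed.

Lemma rs_ext xi xi' n : (forall j, j < n -> xi j = xi' j) -> rs xi n = rs xi' n.
Proof. by move=> H; rewrite /rs (mkseq_ext H). Qed.

Lemma has_pre_nil : has (pre [::]) codes.
Proof. by apply/hasP; exists (nth [::] codes 0); [exact: mem_nth | rewrite /pre take0]. Qed.

Lemma stepB l p w : has (pre p) codes -> size p + size w <= L -> size p < L ->
  foldl step (Some (l, p)) w =
  if has (pre (p ++ w)) codes then
    (if size (p ++ w) == L then Some (index (p ++ w) codes, [::]) else Some (l, p ++ w))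
  else None.
Proof.
elim: w p => [|b w IH] p hp hs hl /=.
  by rewrite cats0 hp (ltn_eqF hl).
have e : p ++ b :: w = rcons p b ++ w by rewrite cat_rcons.
case: ifP => h1.
- case: ifP => h2.
  + have w0 : w = [::].
      by apply: size0nil; move: hs (eqP h2); rewrite size_rcons /=; lia.
    by rewrite w0 /= cats1 h1 h2.
  + rewrite IH // ?e // size_rcons; first by rewrite addSnnS.
    by move: hs h2; rewrite size_rcons /= => hs /eqP h2; lia.
- rewrite foldl_None e; case: ifP => // /hasP [c cin /pre_cat pc].
  by move: h1 => /hasP; case; exists c.
Qed.

Lemma has_pre_full w : size w = L -> has (pre w) codes = (w \in codes).
Proof.
move=> sw; apply/hasP/idP.
- case=> c cin /eqP; rewrite sw.
  have /eqP sc := allP Hc c cin; by rewrite -sc take_size => <-.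
- by move=> win; exists w => //; rewrite /pre take_size.
Qed.

Lemma rs_blk xi m : rs xi (m * L) =
  if all (fun j => blk xi j \in codes) (iota 0 m) then Some (lastc xi m, [::]) else None.
Proof.
elim: m => [//|m IH].
rewrite mulSnr rs_add -/(blk xi m) IH -addn1 iotaD all_cat /= andbT add0n.
case: ifP => _ /=; last by rewrite foldl_None.
rewrite stepB //= ?has_pre_nil ?size_mkseq // has_pre_full ?size_mkseq //.
by case: ifP => // _; rewrite eqxx addn1.
Qed.

Lemma rs_in xi m r l : r < L -> rs xi (m * L) = Some (l, [::]) ->
  rs xi (m * L + r) = if has (pre (take r (blk xi m))) codes then Some (l, take r (blk xi m)) else None.
Proof.
move=> rL H; rewrite rs_add H stepB /= ?has_pre_nil ?size_mkseq ?(ltnW rL) //.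
by rewrite (ltn_eqF rL) /blk take_mkseq // ltnW.
Qed.

Lemma rs_all xi : (forall m, blk xi m \in codes) -> forall n,
  rs xi n = Some (lastc xi (n %/ L), take (n %% L) (blk xi (n %/ L))).
Proof.
move=> H n; rewrite {1}(divn_eq n L).
rewrite (@rs_in _ _ _ (lastc xi (n %/ L))) ?ltn_pmod //.
  have -> // : has (pre (take (n %% L) (blk xi (n %/ L)))) codes.
  apply/hasP; exists (blk xi (n %/ L)) => //.
  by rewrite /pre size_takel // size_mkseq ltnW // ltn_pmod.
by rewrite rs_blk; case: allP => // hh; exfalso; apply: hh => j _.
Qed.

Lemma rs_alive_blocks xi n : rs xi n <> None -> forall j, j < n %/ L -> blk xi j \in codes.
Proof.
move=> H j jn; apply: contraT => hj; exfalso; apply: H.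
apply: (@rs_dead _ ((n %/ L) * L)); last by rewrite leq_divM.
rewrite rs_blk; case: allP => // hh; exfalso; move/negP: hj; apply; apply: hh.
by rewrite mem_iota.
Qed.

End Dec.

Section Casc.
Variables (MA MB : muller).
Definition bot := (mst MA + mst MB)%type.
Definition act (a : Act) (s : bot) : bot :=
  match a with
  | Nop => s
  | Let b => match s with inl x => inl (mdelta x b) | inr y => inr (mdelta y b) end
  | Reset => inr (minit MB)
  end.

Variables (L : nat) (codes : seq (seq bool)) (l0 : nat).
Variables (outc : nat -> Act) (odie : Act) (odead : bool -> Act).

Definition out (x : DS) (b : bool) : Act :=
  if x is Some (l, p) then
    if has (pre (rcons p b)) codes then
      (if size (rcons p b) == L then outc (index (rcons p b) codes) else Nop)
    else odie
  else odead b.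

Definition cstep (xs : DS * bot) (b : bool) : DS * bot :=
  (step L codes xs.1 b, act (out xs.1 b) xs.2).

Definition cs (xi : word) n := foldl cstep (dinit l0, inl (minit MA)) (mkseq xi n).

Lemma csS xi n : cs xi n.+1 = cstep (cs xi n) (xi n).
Proof. by rewrite /cs mkseqS foldl_rcons. Qed.

Lemma cs_add xi n j : cs xi (n + j) = foldl cstep (cs xi n) (mkseq (fun t => xi (n+t)) j).
Proof. by rewrite /cs mkseq_add foldl_cat. Qed.

Lemma foldl_cstep1 xs w : (foldl cstep xs w).1 = foldl (step L codes) xs.1 w.
Proof. by elim: w xs => //= b w IH xs; rewrite IH. Qed.

Lemma cs1 xi n : (cs xi n).1 = rs L codes l0 xi n.
Proof. by rewrite /cs foldl_cstep1. Qed.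

Definition bsq (xi : word) m :=
  foldl (fun s j => act (outc (index (blk L xi j) codes)) s) (inl (minit MA)) (iota 0 m).

Lemma bsqS xi m : bsq xi m.+1 = act (outc (index (blk L xi m) codes)) (bsq xi m).
Proof. by rewrite /bsq -addn1 iotaD foldl_cat. Qed.

Hypothesis HL : 0 < L.
Hypothesis Hc : all (fun c => size c == L) codes.
Hypothesis Hne : 0 < size codes.

Lemma cstepB l p s w : has (pre (p ++ w)) codes -> size p + size w <= L -> size p < L ->
  foldl cstep (Some (l, p), s) w =
  if size (p ++ w) == L then (Some (index (p ++ w) codes, [::]), act (outc (index (p ++ w) codes)) s)
  else (Some (l, p ++ w), s).
Proof.
elim: w p s => [|b w IH] p s hp hs hl /=.
  by rewrite cats0 (ltn_eqF hl).
have e : p ++ b :: w = rcons p b ++ w by rewrite cat_rcons.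
rewrite /cstep /= /step /out.
have h1 : has (pre (rcons p b)) codes.
  by move: hp; rewrite e => /hasP [c cin /pre_cat pc]; apply/hasP; exists c.
rewrite h1; case: ifP => h2.
- have w0 : w = [::].
    by apply: size0nil; move: hs (eqP h2); rewrite size_rcons /=; lia.
  by rewrite w0 /= cats1 h2.
- rewrite /= IH -?e //; first by rewrite size_rcons addSnnS.
  by move: hs h2; rewrite size_rcons /= => hs /eqP h2; lia.
Qed.

Lemma cs_blocks xi : (forall m, blk L xi m \in codes) -> forall n,
  cs xi n = (Some (lastc L codes l0 xi (n %/ L), take (n %% L) (blk L xi (n %/ L))), bsq xi (n %/ L)).
Proof.
move=> H.
have Hm : forall m, cs xi (m * L) = (Some (lastc L codes l0 xi m, [::]), bsq xi m).
  elim=> [//|m IH]; rewrite mulSnr cs_add IH cstepB //= ?size_mkseq //.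
  + by rewrite eqxx bsqS.
  + by rewrite (has_pre_full Hc) ?size_mkseq //; exact: H.
move=> n; have rL : n %% L < L by rewrite ltn_pmod.
rewrite {1}(divn_eq n L) cs_add Hm cstepB ?cat0s ?size_mkseq ?(ltn_eqF rL) //.
- by rewrite /blk take_mkseq // ltnW.
- apply/hasP; exists (blk L xi (n %/ L)) => //.
  by rewrite /pre size_mkseq /blk take_mkseq // ltnW.
- exact: ltnW.
Qed.

Lemma cs_dead xi n t : (cs xi n).1 = None ->
  cs xi (n + t) = (None, foldl (fun s b => act (odead b) s) (cs xi n).2 (mkseq (fun j => xi (n + j)) t)).
Proof.
rewrite cs_add; case: (cs xi n) => x s /= ->.
by elim: (mkseq _ t) s => //= b w IH s; rewrite IH.
Qed.

Lemma cs_die xi n : rs L codes l0 xi n <> None -> rs L codes l0 xi n.+1 = None ->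
  (cs xi n.+1).2 = act odie (cs xi n).2.
Proof.
rewrite csS -!cs1 csS /cstep /=; case: (cs xi n) => [[[l p]|] s] //= _.
by rewrite /step /out; case: ifP => // _; case: ifP.
Qed.

Variables (allst : seq DS).
Hypothesis Hinit : dinit l0 \in allst.
Hypothesis Hcl : forall b x, x \in allst -> step L codes x b \in allst.

Definition stC : finType := (seq_sub allst * (mst MA + mst MB))%type.

Definition Cmul (P : pred {set stC}) : muller :=
  @Muller stC (SeqSub Hinit, inl (minit MA))
    (fun q b => (SeqSub (Hcl b (ssvalP q.1)), act (out (ssval q.1) b) q.2))
    [set S | P S].

Lemma runC P xi n : (ssval (run (Cmul P) xi n).1, (run (Cmul P) xi n).2) = cs xi n.
Proof.
elim: n => [//|n IH]; rewrite csS -IH /=.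
by case: (run (Cmul P) xi n) => [[x xin] s].
Qed.

Lemma accC P xi : accepts (Cmul P) xi <-> P (infset (Cmul P) xi).
Proof. by rewrite acc_infset inE. Qed.

Lemma runC1 P xi n : ssval (run (Cmul P) xi n).1 = rs L codes l0 xi n.
Proof. by rewrite -cs1 -(runC P). Qed.

Lemma runC2 P xi n : (run (Cmul P) xi n).2 = (cs xi n).2.
Proof. by rewrite -(runC P). Qed.

End Casc.

Definition pw T (u : seq T) n := flatten (nseq n u).
Arguments pw : simpl never.

Lemma pwS T (u : seq T) n : pw u n.+1 = u ++ pw u n.
Proof. by rewrite /pw. Qed.

Lemma pwS' T (u : seq T) n : pw u n.+1 = pw u n ++ u.
Proof. by rewrite /pw -addn1 nseqD flatten_cat /= cats0. Qed.

Lemma pwD T (u : seq T) n m : pw u (n + m) = pw u n ++ pw u m.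
Proof. by rewrite /pw nseqD flatten_cat. Qed.

Lemma ds_cat (M : muller) q u v : delta_star q (u ++ v) = delta_star (@delta_star M q u) v.
Proof. by rewrite /delta_star foldl_cat. Qed.

Lemma aper_mono (M : muller) N :
  (forall u (q : mst M), delta_star q (pw u N) = delta_star q (pw u N.+1)) ->
  forall t u (q : mst M), delta_star q (pw u (t + N)) = delta_star q (pw u (t + N).+1).
Proof. by move=> H t u q; rewrite -addnS (pwD u t N) (pwD u t N.+1) (ds_cat q (pw u t) (pw u N)) (ds_cat q (pw u t) (pw u N.+1)) H. Qed.

Section Bot.
Variables MA MB : muller.
Definition actF (s : bot MA MB) (a : Act) := act a s.
Definition letsf (a : Act) := if a is Let b then Some b else None.
Definition isR (a : Act) := if a is Reset then true else false.

Lemma foldl_reset w s s' : has isR w ->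
  foldl actF s w = foldl actF s' w.
Proof.
elim: w s s' => [//|a w IH] s s' /=; case: a => [|b|] //= h; exact: IH.
Qed.

Lemma foldl_noreset w s : ~~ has isR w ->
  foldl actF s w = match s with
                   | inl a => inl (delta_star a (pmap letsf w))
                   | inr b => inr (delta_star b (pmap letsf w)) end.
Proof.
elim: w s => [|a w IH] s; first by case: s.
case: a => [|b|] //= hw; rewrite IH //.
by case: s.
Qed.

Lemma pmap_pw w m : pmap letsf (pw w m) = pw (pmap letsf w) m.
Proof. by elim: m => [|m IH]; rewrite ?pwS ?pmap_cat ?IH. Qed.

Lemma reset_pw w m : has isR (pw w m) -> has isR w.
Proof. by elim: m => [|m IH]; rewrite ?pwS ?has_cat // => /orP [//|/IH]. Qed.

Lemma bot_aper : aperiodic_aut MA -> aperiodic_aut MB ->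
  exists N, forall w s, foldl actF s (pw w N) = foldl actF s (pw w N.+1).
Proof.
move=> [NA HA] [NB HB]; exists (maxn NA NB).+1 => w s.
case: (boolP (has isR w)) => hr.
- have e : forall m, foldl actF s (pw w m.+1) = foldl actF (inl (minit MA)) w.
    by move=> m; rewrite pwS' foldl_cat; apply: foldl_reset.
  by rewrite !e.
- have h1 : forall m, ~~ has isR (pw w m) by move=> m; apply: contra hr; exact: reset_pw.
  rewrite !foldl_noreset // !pmap_pw; case: s => x.
  + have := aper_mono HA ((maxn NA NB).+1 - NA) (pmap letsf w) x.
    have -> : (maxn NA NB).+1 - NA + NA = (maxn NA NB).+1 by have := leq_maxl NA NB; lia.
    by move=> ->.
  + have := aper_mono HB ((maxn NA NB).+1 - NB) (pmap letsf w) x.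
    have -> : (maxn NA NB).+1 - NB + NB = (maxn NA NB).+1 by have := leq_maxr NA NB; lia.
    by move=> ->.
Qed.
End Bot.

Section CAp.
Variables (MA MB : muller) (L : nat) (codes : seq (seq bool)) (l0 : nat).
Variables (outc : nat -> Act) (odie : Act) (odead : bool -> Act).
Variables (allst : seq DS).
Hypothesis Hinit : dinit l0 \in allst.
Hypothesis Hcl : forall b x, x \in allst -> step L codes x b \in allst.

Notation stp := (step L codes).
Notation ot := (out L codes outc odie odead).
Notation CM P := (@Cmul MA MB L codes l0 outc odie odead allst Hinit Hcl P).

Fixpoint outs (x : DS) (w : seq bool) : seq Act :=
  if w is b :: w' then ot x b :: outs (stp x b) w' else [::].

Lemma outs_cat x w1 w2 : outs x (w1 ++ w2) = outs x w1 ++ outs (foldl stp x w1) w2.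
Proof. by elim: w1 x => //= b w IH x; rewrite IH. Qed.

Lemma ds_C P (q : mst (CM P)) w :
  ssval (delta_star q w).1 = foldl stp (ssval q.1) w /\
  (delta_star q w).2 = foldl (@actF MA MB) q.2 (outs (ssval q.1) w).
Proof.
elim: w q => [|b w IH] q; first by [].
by have [h1 h2] := IH (mdelta q b); rewrite /delta_star /= in h1 h2 *; rewrite h1 h2.
Qed.

Definition Dap N := forall u x, x \in allst -> foldl stp x (pw u N) = foldl stp x (pw u N.+1).

Lemma Cap P N : Dap N -> aperiodic_aut MA -> aperiodic_aut MB ->
  aperiodic_aut (CM P).
Proof.
move=> HD hA hB; have [NB HB] := bot_aper hA hB.
exists (N + NB) => u q.
have [a1 a2] := ds_C q (pw u (N + NB)).
have [b1 b2] := ds_C q (pw u (N + NB).+1).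
set x := ssval q.1 in a1 a2 b1 b2.
have xin : x \in allst by exact: ssvalP.
set x' := foldl stp x (pw u N).
have fx : foldl stp x' u = x' by rewrite /x' -foldl_cat -pwS' HD.
have fm : forall m, foldl stp x' (pw u m) = x' /\ outs x' (pw u m) = pw (outs x' u) m.
  elim=> [|m [IH1 IH2]]; first by rewrite /pw.
  by rewrite !pwS foldl_cat fx IH1 outs_cat fx IH2.
have e1 := fm NB; have e2 := fm NB.+1.
case: (delta_star q (pw u (N + NB))) a1 a2 => [d1 s1] /= a1 a2.
case: (delta_star q (pw u (N + NB).+1)) b1 b2 => [d2 s2] /= b1 b2.
rewrite -addnS in b1 b2.
rewrite pwD foldl_cat -/x' e1.1 in a1; rewrite pwD foldl_cat -/x' e2.1 in b1.
rewrite pwD outs_cat foldl_cat -/x' e1.2 in a2.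
rewrite pwD outs_cat foldl_cat -/x' e2.2 in b2.
congr (_, _); last by rewrite a2 b2 HB.
by apply: val_inj; rewrite /= a1 b1.
Qed.

Definition enc (x : DS) := index x allst.
Definition gen b : seq nat := map (fun x => enc (stp x b)) allst.
Definition tmul (t : seq nat) b := map (fun i => nth 0 (gen b) i) t.
Definition Tu u := map (fun x => enc (foldl stp x u)) allst.

Lemma foldl_in x u : x \in allst -> foldl stp x u \in allst.
Proof. by elim: u x => //= b u IH x xin; apply: IH; apply: Hcl. Qed.

Lemma Tu_rcons u b : Tu (rcons u b) = tmul (Tu u) b.
Proof.
rewrite /Tu /tmul -map_comp; apply/eq_in_map => x xin /=.
rewrite foldl_rcons (nth_map (None : DS)) ?index_mem ?foldl_in //.
by rewrite nth_index ?foldl_in.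
Qed.

Lemma Tu_iter u k x : x \in allst ->
  iter k (fun j => nth 0 (Tu u) j) (enc x) = enc (foldl stp x (pw u k)).
Proof.
move=> xin; elim: k => [|k IH]; first by rewrite /pw.
have yin : foldl stp x (pw u k) \in allst by exact: foldl_in.
rewrite iterS IH /Tu (nth_map (None : DS)) ?index_mem // nth_index //.
by rewrite pwS' foldl_cat.
Qed.

Lemma index_inj_in x y : x \in allst -> y \in allst -> enc x = enc y -> x = y.
Proof. by move=> xin yin e; rewrite -(nth_index None xin) -(nth_index None yin) -/(enc x) -/(enc y) e. Qed.

Lemma Tu_nil : Tu [::] = map enc allst.
Proof. by []. Qed.

Lemma cert (Ms : seq (seq nat)) N :
  map enc allst \in Ms ->
  all (fun t => (tmul t false \in Ms) && (tmul t true \in Ms)) Ms ->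
  all (fun t => all (fun i => iter N (fun j => nth 0 t j) i == iter N.+1 (fun j => nth 0 t j) i)
                    (iota 0 (size allst))) Ms ->
  Dap N.
Proof.
move=> C1 C2 C3.
have TM : forall u, Tu u \in Ms.
  elim/last_ind => [//|u b IH]; rewrite Tu_rcons.
  by have /andP [h0 h1] := allP C2 _ IH; case: b.
move=> u x xin; apply: index_inj_in; try exact: foldl_in.
rewrite -!Tu_iter //; apply/eqP.
have := allP C3 _ (TM u) => /allP; apply.
by rewrite mem_iota add0n /enc index_mem.
Qed.

End CAp.

Definition code0 := [:: true; true; false; false; false; false].
Definition code1 := [:: true; true; false; true; false; false].
Definition code2 := [:: true; true; false; false; true; false].
Definition codes_f : seq (seq bool) := [:: code0; code1; code2].
Definition codes_g : seq (seq bool) := [:: code0 ++ code2; code1 ++ code2].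

Definition mk_allst L (codes : seq (seq bool)) : seq DS :=
  None :: [seq Some (l, p) | l <- iota 0 (size codes),
                             p <- undup [seq take i c | c <- codes, i <- iota 0 L]].

Definition allst_f := mk_allst 6 codes_f.
Definition allst_g := mk_allst 12 codes_g.

Lemma Hinit_f : dinit 0 \in allst_f. Proof. by vm_compute. Qed.
Lemma Hinit_g : dinit 0 \in allst_g. Proof. by vm_compute. Qed.

Lemma cl_f : all (fun x => (step 6 codes_f x false \in allst_f) && (step 6 codes_f x true \in allst_f)) allst_f.
Proof. by vm_compute. Qed.
Lemma cl_g : all (fun x => (step 12 codes_g x false \in allst_g) && (step 12 codes_g x true \in allst_g)) allst_g.
Proof. by vm_compute. Qed.

Lemma Hcl_f b x : x \in allst_f -> step 6 codes_f x b \in allst_f.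
Proof. by move=> xin; have /andP [h0 h1] := allP cl_f x xin; case: b. Qed.
Lemma Hcl_g b x : x \in allst_g -> step 12 codes_g x b \in allst_g.
Proof. by move=> xin; have /andP [h0 h1] := allP cl_g x xin; case: b. Qed.

Fixpoint clos (tm : seq nat -> bool -> seq nat) (fuel : nat) (todo seen : seq (seq nat)) : seq (seq nat) :=
  if fuel is f.+1 then
    if todo is t :: todo' then
      let n0 := tm t false in let n1 := tm t true in
      let s1 := if n0 \in seen then seen else n0 :: seen in
      let t1 := if n0 \in seen then todo' else n0 :: todo' in
      let s2 := if n1 \in s1 then s1 else n1 :: s1 in
      let t2 := if n1 \in s1 then t1 else n1 :: t1 in
      clos tm f t2 s2
    else seen
  else seen.

Definition tmG (G0 G1 : seq nat) (t : seq nat) (b : bool) := map (nth 0 (if b then G1 else G0)) t.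

Definition id_f := map (enc allst_f) allst_f.
Definition G0f := gen 6 codes_f allst_f false.
Definition G1f := gen 6 codes_f allst_f true.
Definition G0g := gen 12 codes_g allst_g false.
Definition G1g := gen 12 codes_g allst_g true.
Definition G0f' := Eval vm_compute in G0f.
Definition G1f' := Eval vm_compute in G1f.
Definition G0g' := Eval vm_compute in G0g.
Definition G1g' := Eval vm_compute in G1g.
Lemma G0fE : G0f = G0f'. Proof. vm_compute. reflexivity. Qed.
Lemma G1fE : G1f = G1f'. Proof. vm_compute. reflexivity. Qed.
Lemma G0gE : G0g = G0g'. Proof. vm_compute. reflexivity. Qed.
Lemma G1gE : G1g = G1g'. Proof. vm_compute. reflexivity. Qed.
Definition id_f' := Eval vm_compute in id_f.
Definition id_g := map (enc allst_g) allst_g.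
Definition id_g' := Eval vm_compute in id_g.
Lemma id_fE : id_f = id_f'. Proof. vm_compute. reflexivity. Qed.
Lemma id_gE : id_g = id_g'. Proof. vm_compute. reflexivity. Qed.

Definition Ms_f := Eval vm_compute in clos (tmG G0f' G1f') 3000 [:: id_f'] [:: id_f'].
Definition Ms_g := Eval vm_compute in clos (tmG G0g' G1g') 3000 [:: id_g'] [:: id_g'].

Definition chk2 G0 G1 Ms := all (fun t => (tmG G0 G1 t false \in Ms) && (tmG G0 G1 t true \in Ms)) Ms.
Definition chk3 N n (Ms : seq (seq nat)) := all (fun t => all (fun i => iter N (fun j => nth 0 t j) i == iter N.+1 (fun j => nth 0 t j) i) (iota 0 n)) Ms.

Lemma sz : (size Ms_f, size Ms_g) = (225, 707). Proof. vm_compute. reflexivity. Qed.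
Lemma c1f : id_f' \in Ms_f. Proof. vm_compute. reflexivity. Qed.
Lemma c1g : id_g' \in Ms_g. Proof. vm_compute. reflexivity. Qed.
Lemma c2f : chk2 G0f' G1f' Ms_f. Proof. vm_compute. reflexivity. Qed.
Lemma c2g : chk2 G0g' G1g' Ms_g. Proof. vm_compute. reflexivity. Qed.
Lemma c3f : chk3 5 (size allst_f) Ms_f. Proof. vm_compute. reflexivity. Qed.
Lemma c3g : chk3 5 (size allst_g) Ms_g. Proof. vm_compute. reflexivity. Qed.

Lemma tmulE L codes allst G0 G1 : gen L codes allst false = G0 -> gen L codes allst true = G1 ->
  forall t b, tmul L codes allst t b = tmG G0 G1 t b.
Proof. by move=> e0 e1 t []; rewrite /tmul /tmG ?e0 ?e1. Qed.

Lemma Dap_f : Dap 6 codes_f allst_f 5.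
Proof.
apply: (@cert _ _ _ Hcl_f Ms_f).
- by rewrite -/id_f id_fE c1f.
- have := c2f; rewrite /chk2; apply: sub_all => t.
  by rewrite !(tmulE G0fE G1fE).
- exact: c3f.
Qed.

Lemma Dap_g : Dap 12 codes_g allst_g 5.
Proof.
apply: (@cert _ _ _ Hcl_g Ms_g).
- by rewrite -/id_g id_gE c1g.
- have := c2g; rewrite /chk2; apply: sub_all => t.
  by rewrite !(tmulE G0gE G1gE).
- exact: c3g.
Qed.

Lemma tildeE (c : 'I_3) : tilde c = nth [::] codes_f c.
Proof. by case: c => [[|[|[|n]]] H]. Qed.

Lemma tilde_in (c : 'I_3) : tilde c \in codes_f.
Proof. by case: c => [[|[|[|n]]] H]. Qed.

Lemma index_tilde (c : 'I_3) : index (tilde c) codes_f = c.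
Proof. by case: c => [[|[|[|n]]] H]. Qed.

Lemma size_tilde (c : 'I_3) : size (tilde c) = 6.
Proof. by case: c => [[|[|[|n]]] H]. Qed.

Lemma tilde_inj (c d : 'I_3) : tilde c = tilde d -> c = d.
Proof. by move=> e; apply: val_inj; rewrite /= -index_tilde e index_tilde. Qed.

Lemma f_code_pos zeta m j : j < 6 -> f_code zeta (m * 6 + j) = nth false (tilde (zeta m)) j.
Proof. by move=> j6; rewrite /f_code divnMDl // divn_small // addn0 modnMDl modn_small. Qed.

Lemma blk_f zeta m : blk 6 (f_code zeta) m = tilde (zeta m).
Proof.
rewrite /blk -[RHS](mkseq_nth false (tilde (zeta m))) size_tilde.
by apply: mkseq_ext => j j6; rewrite f_code_pos.
Qed.

Lemma f_code_ext zeta zeta' : zeta =1 zeta' -> f_code zeta = f_code zeta'.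
Proof. by move=> e; apply: functional_extensionality => n; rewrite /f_code e. Qed.

Lemma blocks_f xi : (forall m, blk 6 xi m \in codes_f) ->
  xi = f_code (fun m => inord (index (blk 6 xi m) codes_f)).
Proof.
move=> H; apply: functional_extensionality => n; rewrite /f_code.
set m := n %/ 6.
have e : tilde (inord (index (blk 6 xi m) codes_f) : 'I_3) = blk 6 xi m.
  rewrite tildeE inordK; first by rewrite nth_index.
  by have := H m; rewrite -index_mem.
by rewrite e /blk nth_mkseq ?ltn_pmod // -divn_eq.
Qed.

Lemma bit3_val b : val (bit3 b) = b.
Proof. by rewrite /bit3 /= inordK //; case: b. Qed.

Lemma bit3_val1 (c : 'I_3) : c != two3 -> bit3 (val c == 1) = c.
Proof. by move=> h; apply: val_inj; rewrite bit3_val; case: c h => [[|[|[|n]]] H]. Qed.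

Lemma factor6_blk xi m : factor6 xi (m * 6) = blk 6 xi m.
Proof. by []. Qed.

Lemma comma_free zeta n : factor6 (f_code zeta) n = tilde two3 ->
  n %% 6 = 0 /\ zeta (n %/ 6) = two3.
Proof.
move=> H.
have h0 : f_code zeta n = true by have := congr1 (nth false ^~ 0) H; rewrite /factor6 nth_mkseq // addn0.
have h1 : f_code zeta n.+1 = true by have := congr1 (nth false ^~ 1) H; rewrite /factor6 nth_mkseq // addn1.
move: h0 h1 H; rewrite {1 2 3}(divn_eq n 6); set m := n %/ 6; set r := n %% 6.
have r6 : r < 6 by rewrite ltn_pmod.
rewrite f_code_pos // -addnS.
case: r r6 => [|[|[|[|[|[|r]]]]]] // _.
- by rewrite addn0 factor6_blk blk_f => _ _ /tilde_inj.
- by rewrite f_code_pos //; case: (zeta m) => [[|[|[|?]]] ?].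
- by rewrite f_code_pos //; case: (zeta m) => [[|[|[|?]]] ?].
- by rewrite f_code_pos //; case: (zeta m) => [[|[|[|?]]] ?].
- by rewrite f_code_pos //; case: (zeta m) => [[|[|[|?]]] ?].
- by case: (zeta m) => [[|[|[|?]]] ?].
Qed.

Lemma in_inf_run (C : muller) xi q : q \in infset C xi -> forall N, exists n, N <= n /\ run C xi n = q.
Proof. by rewrite inE => /infbP. Qed.

Lemma ex_infb (C : muller) xi (p : pred (mst C)) :
  [exists q in infset C xi, p q] <-> (forall N, exists n, N <= n /\ p (run C xi n)).
Proof. rewrite -ex_inf; split; [by move/exists_inP | by move=> h; apply/exists_inP]. Qed.

Lemma HLf : 0 < 6. Proof. by []. Qed.
Lemma Hcf : all (fun c => size c == 6) codes_f. Proof. by []. Qed.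
Lemma Hnef : 0 < size codes_f. Proof. by []. Qed.

Definition outc_q (i : nat) : Act := if i == 0 then Let false else if i == 1 then Let true else Reset.
Definition isl2 (x : DS) := if x is Some (l, _) then l == 2 else false.

Section QOP.
Variables (M : muller).
Notation stq := (stC M M allst_f).
Definition isl (s : bot M M) := if s is inl _ then true else false.
Definition piA (q : stq) : option (mst M) := if q.2 is inl a then Some a else None.
Definition piB (q : stq) : option (mst M) := if q.2 is inr a then Some a else None.
Definition projA (S : {set stq}) := [set a | [exists q in S, piA q == Some a]].
Definition projB (S : {set stq}) := [set a | [exists q in S, piB q == Some a]].

Variables (b_ij : bool).
Definition Pq (S : {set stq}) : bool :=
  if [exists q in S, ssval q.1 == None] then b_ij
  else if [exists q in S, isl2 (ssval q.1)] then b_ij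
  else if [forall q in S, isl q.2] then projA S \in macc M
  else projB S \in macc M.

Definition Cq := @Cmul M M 6 codes_f 0 outc_q Nop (fun _ => Nop) allst_f Hinit_f Hcl_f Pq.

Lemma runq1 xi n : ssval (run Cq xi n).1 = rs 6 codes_f 0 xi n.
Proof. exact: runC1. Qed.
Lemma runq2 xi n : (run Cq xi n).2 = (cs M M 6 codes_f 0 outc_q Nop (fun _ => Nop) xi n).2.
Proof. exact: runC2. Qed.

Lemma q_dead xi : (exists n, rs 6 codes_f 0 xi n = None) ->
  [exists q in infset Cq xi, ssval q.1 == None].
Proof.
case=> n0 h0; apply: (proj2 (@ex_infb Cq xi (fun q => ssval q.1 == None))) => N; exists (maxn N n0); split; first exact: leq_maxl.
by rewrite runq1 (rs_dead h0) ?leq_maxr.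
Qed.

Lemma q_alive xi : (forall n, rs 6 codes_f 0 xi n <> None) ->
  [exists q in infset Cq xi, ssval q.1 == None] = false.
Proof.
move=> H; apply: negbTE; apply/negP => h.
have [n [_ e]] := proj1 (@ex_infb Cq xi (fun q => ssval q.1 == None)) h 0.
by move: e; rewrite runq1 => /eqP; apply: H.
Qed.

Lemma q_struct zeta n :
  rs 6 codes_f 0 (f_code zeta) n = Some (lastc 6 codes_f 0 (f_code zeta) (n %/ 6), take (n %% 6) (blk 6 (f_code zeta) (n %/ 6))) /\
  (cs M M 6 codes_f 0 outc_q Nop (fun _ => Nop) (f_code zeta) n).2 = bsq M M 6 codes_f outc_q (f_code zeta) (n %/ 6).
Proof.
have hb : forall m, blk 6 (f_code zeta) m \in codes_f by move=> m; rewrite blk_f tilde_in.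
split; first exact: (rs_all 0 HLf Hcf Hnef hb).
by rewrite (cs_blocks M M 0 outc_q Nop (fun _ => Nop) HLf Hcf Hnef hb).
Qed.

Lemma lastc_f zeta m : lastc 6 codes_f 0 (f_code zeta) m.+1 = zeta m.
Proof. by rewrite /lastc blk_f index_tilde. Qed.

Lemma bsq_fS zeta m : bsq M M 6 codes_f outc_q (f_code zeta) m.+1 =
  act (outc_q (zeta m)) (bsq M M 6 codes_f outc_q (f_code zeta) m).
Proof. by rewrite bsqS blk_f index_tilde. Qed.

Lemma f_image_or_dead xi : (exists n, rs 6 codes_f 0 xi n = None) \/ exists zeta, xi = f_code zeta.
Proof.
case: (classic (exists n, rs 6 codes_f 0 xi n = None)) => [h|h]; [by left | right].
have ha : forall n, rs 6 codes_f 0 xi n <> None by move=> n e; apply: h; exists n.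
have hb : forall m, blk 6 xi m \in codes_f.
  by move=> m; apply: (rs_alive_blocks HLf Hcf Hnef (ha (m.+1 * 6))); rewrite mulnK.
by eexists; apply: blocks_f.
Qed.

Lemma q_case1_val xi : q_case1 xi -> Pq (infset Cq xi) = b_ij.
Proof.
move=> H; rewrite /Pq.
case: (f_image_or_dead xi) => [hd | [zeta exi]]; first by rewrite q_dead.
subst xi; rewrite q_alive; last by move=> n; rewrite (q_struct zeta n).1.
case: H => [hn | hinf]; first by exfalso; apply: hn; exists zeta.
suff -> : [exists q in infset Cq (f_code zeta), isl2 (ssval q.1)] by [].
apply: (proj2 (ex_infb _ _)) => N; have [n [Nn e]] := hinf N.
have [r0 z2] := comma_free e.
exists ((n %/ 6).+1 * 6); split.
  by apply: leq_trans Nn _; rewrite {1}(divn_eq n 6) r0 addn0 mulSnr leq_addr.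
by rewrite runq1 (q_struct zeta _).1 mulnK // lastc_f z2.
Qed.

Lemma q_c2 xi eta : q_case2 xi eta -> (Pq (infset Cq xi) <-> accepts M eta).
Proof.
rewrite /q_case2 => e; have exi := functional_extensionality _ _ e; subst xi.
set zeta := fun n => bit3 (eta n).
have hs := q_struct zeta.
have hbsq : forall m, bsq M M 6 codes_f outc_q (f_code zeta) m = inl (run M eta m).
  elim=> [//|m IH]; rewrite bsq_fS IH /zeta bit3_val /=.
  by case: (eta m).
rewrite /Pq q_alive; last by move=> n; rewrite (hs n).1.
have -> : [exists q in infset Cq (f_code zeta), isl2 (ssval q.1)] = false.
  apply: negbTE; apply/negP => h.
  have [n [_ e2]] := proj1 (@ex_infb Cq _ (fun q => isl2 (ssval q.1))) h 0.
  move: e2; rewrite runq1 (hs n).1 /=; case: (n %/ 6) => [//|m].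
  by rewrite lastc_f /zeta bit3_val; case: (eta m).
have -> : [forall q in infset Cq (f_code zeta), isl q.2].
  apply/forall_inP => q /in_inf_run /(_ 0) [n [_ <-]].
  by rewrite runq2 (hs n).2 hbsq.
rewrite acc_infset; suff -> : projA (infset Cq (f_code zeta)) = infset M eta by [].
have P := @proj_inf M Cq (f_code zeta) eta piA 0 0 6 HLf.
apply/setP => a; rewrite inE.
have P' := P (fun n _ => ltac:(by rewrite /piA runq2 (hs n).2 hbsq subn0)) a.
apply/exists_inP/idP.
- by case=> q qi /eqP h; apply/P'; exists q.
- by move/P' => [q qi h]; exists q => //; rewrite h.
Qed.

Lemma q_c3 xi eta : q_case3 xi eta -> (Pq (infset Cq xi) <-> accepts M eta).
Proof.
case=> sigma e; have exi := functional_extensionality _ _ e; subst xi.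
set zeta := prepend _ _.
set K := size sigma.
have zK : zeta K = two3.
  by rewrite /zeta /prepend size_rcons ltnSn nth_rcons ltnn eqxx.
have zg : forall t, zeta (K.+1 + t) = bit3 (eta t).
  by move=> t; rewrite /zeta /prepend size_rcons ltnNge leq_addr /= addKn.
have hs := q_struct zeta.
have hbsq : forall t, bsq M M 6 codes_f outc_q (f_code zeta) (K.+1 + t) = inr (run M eta t).
  elim=> [|t IH]; first by rewrite addn0 bsq_fS zK.
  by rewrite addnS bsq_fS IH zg bit3_val /=; case: (eta t).
rewrite /Pq q_alive; last by move=> n; rewrite (hs n).1.
have -> : [exists q in infset Cq (f_code zeta), isl2 (ssval q.1)] = false.
  apply: negbTE; apply/negP => h.
  have [n [Nn e2]] := proj1 (@ex_infb Cq _ (fun q => isl2 (ssval q.1))) h (K.+2 * 6).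
  have hm : K.+2 <= n %/ 6 by rewrite leq_divRL.
  move: e2; rewrite runq1 (hs n).1 /=.
  have -> : n %/ 6 = (K.+1 + (n %/ 6 - K.+2)).+1 by lia.
  by rewrite lastc_f zg bit3_val; case: (eta _).
have -> : [forall q in infset Cq (f_code zeta), isl q.2] = false.
  apply: negbTE; apply/negP => /forall_inP h.
  have : forall N, exists n, N <= n /\ ~~ isl (run Cq (f_code zeta) n).2.
    move=> N; exists (maxn N (K.+1 * 6)); split; first exact: leq_maxl.
    have hm : K.+1 <= maxn N (K.+1 * 6) %/ 6 by rewrite leq_divRL // leq_maxr.
    rewrite runq2 (hs _).2.
    by rewrite -(subnKC hm) hbsq.
  move/(proj2 (@ex_infb Cq _ (fun q => ~~ isl q.2))) => /exists_inP [q qi].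
  by rewrite h.
rewrite acc_infset; suff -> : projB (infset Cq (f_code zeta)) = infset M eta by [].
have P := @proj_inf M Cq (f_code zeta) eta piB (K.+1 * 6) (K.+1 * 6) 6 HLf.
apply/setP => a; rewrite inE.
have P' : (exists2 q, q \in infset Cq (f_code zeta) & piB q = Some a) <-> a \in infset M eta.
  apply: P => n Nn.
  have hm : K.+1 <= n %/ 6 by rewrite leq_divRL.
  by rewrite /piB runq2 (hs n).2 divnBMl -(subnKC hm) hbsq addKn.
apply/exists_inP/idP.
- by case=> q qi /eqP h; apply/P'; exists q.
- by move/P' => [q qi h]; exists q => //; rewrite h.
Qed.

End QOP.

Lemma q_exh xi : ~ q_case1 xi -> (exists eta, q_case2 xi eta) \/ (exists eta, q_case3 xi eta).
Proof.
move=> H.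
have [zeta exi] : exists zeta, xi = f_code zeta.
  apply: NNPP => h; apply: H; left => -[zeta e]; apply: h; exists zeta.
  exact: functional_extensionality.
have [N HN] : exists N, forall n, N <= n -> factor6 xi n <> tilde two3.
  apply: NNPP => h; apply: H; right => N; apply: NNPP => h2; apply: h; exists N => n Nn e.
  by apply: h2; exists n.
subst xi.
have z2 : forall m, N <= m -> zeta m != two3.
  move=> m Nm; apply/eqP => e; apply: (HN (m * 6)); first by lia.
  by rewrite factor6_blk blk_f e.
case: (classic (exists m, zeta m = two3)) => [[m0 hm0] | hno].
- right.
  have exP : exists m, zeta m == two3 by exists m0; rewrite hm0.
  have ubP : forall m, zeta m == two3 -> m <= N.
    move=> m /eqP hm; rewrite leqNgt; apply/negP => /ltnW /z2; by rewrite hm eqxx.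
  case: (ex_maxnP exP ubP) => K /eqP hK maxK.
  exists (fun t => val (zeta (K.+1 + t)) == 1); exists (mkseq zeta K).
  move=> n; congr f_code ; apply: functional_extensionality => {}n.
  rewrite /prepend size_rcons size_mkseq nth_rcons size_mkseq.
  case: (ltnP n K.+1) => hn.
  + case: (ltnP n K) => hn2; first by rewrite nth_mkseq.
    have -> : n = K by lia.
    by rewrite eqxx hK.
  + rewrite subnKC // bit3_val1 //; apply/negP => /maxK; lia.
- left; exists (fun m => val (zeta m) == 1) => n.
  congr f_code; apply: functional_extensionality => m.
  by rewrite bit3_val1 //; apply/eqP => e; apply: hno; exists m.
Qed.

Lemma q_main k (i j : 'I_k) (A : kpart k) (M : muller) :
  (forall eta, A eta = j <-> accepts M eta) ->
  forall xi, q_op i A xi = j <-> accepts (Cq M (i == j)) xi.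
Proof.
move=> HA xi; rewrite accC /q_op.
case: excluded_middle_informative => h1.
  by rewrite q_case1_val //; split => [->|/eqP].
case: excluded_middle_informative => h2.
  case: (constructive_indefinite_description _ h2) => eta /= he.
  by rewrite HA; symmetry; apply: q_c2.
case: excluded_middle_informative => h3.
  case: (constructive_indefinite_description _ h3) => eta /= he.
  by rewrite HA; symmetry; apply: q_c3.
by exfalso; case: (q_exh h1).
Qed.


Lemma HLg : 0 < 12. Proof. by []. Qed.
Lemma Hcg : all (fun c => size c == 12) codes_g. Proof. by []. Qed.
Lemma Hneg : 0 < size codes_g. Proof. by []. Qed.

Definition gblk (b : bool) := nth [::] codes_g b.

Lemma gblkE b : gblk b = tilde (bit3 b) ++ tilde two3.
Proof. by case: b; rewrite /gblk /tilde /bit3 /= inordK. Qed.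

Lemma gblk_in b : gblk b \in codes_g. Proof. by case: b. Qed.
Lemma index_gblk b : index (gblk b) codes_g = b. Proof. by case: b. Qed.
Lemma size_gblk b : size (gblk b) = 12. Proof. by case: b. Qed.

Lemma gblk_of c : c \in codes_g -> c = gblk (index c codes_g == 1).
Proof. by rewrite !inE => /orP [/eqP->|/eqP->]. Qed.

Lemma g_code_pos eta m j : j < 12 -> g_code eta (m * 12 + j) = nth false (gblk (eta m)) j.
Proof.
move=> j12; rewrite /g_code divnMDl // divn_small // addn0 modnMDl modn_small //.
rewrite gblkE nth_cat size_tilde.
by case: ifP.
Qed.

Lemma blk_g eta m : blk 12 (g_code eta) m = gblk (eta m).
Proof.
rewrite /blk -[RHS](mkseq_nth false (gblk (eta m))) size_gblk.
by apply: mkseq_ext => j j12; rewrite g_code_pos.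
Qed.

Lemma blocks_g xi : (forall m, blk 12 xi m \in codes_g) ->
  xi = g_code (fun m => index (blk 12 xi m) codes_g == 1).
Proof.
move=> H; apply: functional_extensionality => n.
rewrite (divn_eq n 12) g_code_pos ?ltn_pmod // -gblk_of //.
by rewrite /blk nth_mkseq // ltn_pmod.
Qed.

Lemma rs_g_all eta n : rs 12 codes_g 0 (g_code eta) n <> None.
Proof.
have hb : forall m, blk 12 (g_code eta) m \in codes_g by move=> m; rewrite blk_g gblk_in.
by rewrite (rs_all 0 HLg Hcg Hneg hb).
Qed.

Lemma dead_inconsistent xi n eta : (forall j, j < n -> g_code eta j = xi j) ->
  rs 12 codes_g 0 xi n <> None.
Proof. by move=> H; rewrite -(rs_ext _ _ _ H); apply: rs_g_all. Qed.

Lemma alive_consistent xi n : rs 12 codes_g 0 xi n <> None ->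
  exists eta, forall j, j < n -> g_code eta j = xi j.
Proof.
move=> H.
set m := n %/ 12; set r := n %% 12.
have r12 : r < 12 by rewrite ltn_pmod.
have en : n = m * 12 + r by rewrite /m /r -divn_eq.
have hb : forall j, j < m -> blk 12 xi j \in codes_g := rs_alive_blocks HLg Hcg Hneg H.
have hm : rs 12 codes_g 0 xi (m * 12) = Some (lastc 12 codes_g 0 xi m, [::]).
  rewrite (rs_blk 0 HLg Hcg Hneg); case: allP => // hh; exfalso; apply: hh => j.
  by rewrite mem_iota add0n => /andP [_ /hb].
move: H; rewrite en (rs_in HLg Hcg Hneg r12 hm); case: ifP => // /hasP [c cin pc] _.
set beta := index c codes_g == 1.
exists (fun j => if j < m then index (blk 12 xi j) codes_g == 1 else beta) => j jn.
rewrite (divn_eq j 12) g_code_pos ?ltn_pmod //.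
set j' := j %/ 12; set r' := j %% 12.
have r'12 : r' < 12 by rewrite ltn_pmod.
case: ifP => hj'.
- by rewrite -gblk_of ?hb // /blk nth_mkseq.
- have ej' : j' = m.
    have h1 : m <= j' by rewrite leqNgt hj'.
    have h2 : j' < m.+1 by rewrite ltn_divLR //; lia.
    lia.
  have hr' : r' < r by have := divn_eq j 12; rewrite -/j' -/r' ej'; lia.
  rewrite /beta -gblk_of // ej'.
  move: pc; rewrite /pre size_takel ?size_mkseq ?(ltnW r12) // => /eqP e.
  by rewrite -(nth_take _ hr') e nth_take // /blk nth_mkseq // (ltn_trans hr').
Qed.

Lemma g_bad_iff w xi : (forall j, j < size w -> xi j = nth false w j) ->
  (g_bad w <-> rs 12 codes_g 0 xi (size w) = None).
Proof.
move=> H; split.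
- move=> hb; apply: NNPP => ha; have [eta he] := alive_consistent ha.
  by apply: (hb eta) => j jw; rewrite he // H.
- move=> hd zeta hz; apply: (@dead_inconsistent xi (size w) zeta) => // j jw.
  by rewrite hz // H.
Qed.

Lemma g_fin_mkseq zeta m : g_fin (mkseq zeta m) = mkseq (g_code zeta) (m * 12).
Proof.
elim: m => [//|m IH].
rewrite mkseqS mulSnr mkseq_add /g_fin map_rcons flatten_rcons -/(g_fin _) IH.
congr (_ ++ _); rewrite -gblkE -blk_g.
by [].
Qed.

Definition outc_g (i : nat) : Act := Let (i == 1).

Lemma ltn_pred n : 0 < n -> n.-1 < n.
Proof. by rewrite ltn_predL. Qed.

Section DOT.
Variables (MA MB : muller).
Notation std := (stC MA MB allst_g).
Definition piA' (q : std) : option (mst MA) := if q.2 is inl a then Some a else None.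
Definition piB' (q : std) : option (mst MB) := if q.2 is inr a then Some a else None.
Definition projA' (S : {set std}) := [set a | [exists q in S, piA' q == Some a]].
Definition projB' (S : {set std}) := [set a | [exists q in S, piB' q == Some a]].

Definition Pd (S : {set std}) : bool :=
  if [exists q in S, ssval q.1 == None] then projB' S \in macc MB else projA' S \in macc MA.

Definition Cd := @Cmul MA MB 12 codes_g 0 outc_g Reset Let allst_g Hinit_g Hcl_g Pd.

Lemma rund1 xi n : ssval (run Cd xi n).1 = rs 12 codes_g 0 xi n.
Proof. exact: runC1. Qed.
Lemma rund2 xi n : (run Cd xi n).2 = (cs MA MB 12 codes_g 0 outc_g Reset Let xi n).2.
Proof. exact: runC2. Qed.

Lemma d_a eta : Pd (infset Cd (g_code eta)) <-> accepts MA eta.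
Proof.
have hb : forall m, blk 12 (g_code eta) m \in codes_g by move=> m; rewrite blk_g gblk_in.
have hcs := cs_blocks MA MB 0 outc_g Reset Let HLg Hcg Hneg hb.
have hbsq : forall m, bsq MA MB 12 codes_g outc_g (g_code eta) m = inl (run MA eta m).
  elim=> [//|m IH]; rewrite bsqS IH blk_g index_gblk /outc_g /=.
  by case: (eta m).
rewrite /Pd.
have -> : [exists q in infset Cd (g_code eta), ssval q.1 == None] = false.
  apply: negbTE; apply/negP => h.
  have [n [_ e2]] := proj1 (@ex_infb Cd _ (fun q => ssval q.1 == None)) h 0.
  by move: e2; rewrite rund1 => /eqP; apply: rs_g_all.
rewrite acc_infset; suff -> : projA' (infset Cd (g_code eta)) = infset MA eta by [].
have P := @proj_inf MA Cd (g_code eta) eta piA' 0 0 12 HLg.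
apply/setP => a; rewrite inE.
have P' := P (fun n _ => ltac:(by rewrite /piA' rund2 hcs hbsq subn0)) a.
apply/exists_inP/idP.
- by case=> q qi /eqP h; apply/P'; exists q.
- by move/P' => [q qi h]; exists q => //; rewrite h.
Qed.

Lemma foldl_let (eta : word) t :
  foldl (fun s b => @act MA MB (Let b) s) (inr (minit MB)) (mkseq eta t) = inr (run MB eta t).
Proof. by elim: t => [//|t IH]; rewrite mkseqS foldl_rcons IH. Qed.

Lemma d_b xi eta : dot_case2 xi eta -> (Pd (infset Cd xi) <-> accepts MB eta).
Proof.
case=> u [v] [vne exi hbad hmin].
set w := g_fin u ++ v in exi hbad.
set n0 := size w.
have agree : forall j, j < n0 -> xi j = nth false w j.
  by move=> j jn; rewrite exi /prepend jn (set_nth_default false).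
have dead : rs 12 codes_g 0 xi n0 = None by apply/(g_bad_iff agree).
have sv : 0 < size v by case: (v) vne.
have n0pos : 0 < n0 by rewrite /n0 /w size_cat; lia.
have alive : rs 12 codes_g 0 xi n0.-1 <> None.
  have hm := hmin (size v).-1 (ltn_pred sv).
  move=> hd; apply: hm.
  have sw : size (g_fin u ++ take (size v).-1 v) = n0.-1.
    by rewrite size_cat size_takel ?leq_pred // /n0 /w size_cat; lia.
  have agree' : forall j, j < size (g_fin u ++ take (size v).-1 v) ->
      xi j = nth false (g_fin u ++ take (size v).-1 v) j.
    move=> j; rewrite sw => jn; rewrite agree; last by move: jn n0pos; lia.
    rewrite /w !nth_cat.
    case: ifP => // hj; rewrite nth_take //; move: jn; rewrite /n0 /w size_cat; lia.
  by apply/(g_bad_iff agree'); rewrite sw.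
have die := cs_die MA MB outc_g Reset Let alive.
rewrite (prednK n0pos) in die; have die' := die dead.
have hcs : forall t, cs MA MB 12 codes_g 0 outc_g Reset Let xi (n0 + t) =
    (None, inr (run MB eta t)).
  move=> t; rewrite cs_dead; last by rewrite cs1.
  rewrite die' /=.
  rewrite (mkseq_ext (g := eta)); first by rewrite foldl_let.
  by move=> j _; rewrite exi /prepend -/n0 ltnNge leq_addr /= addKn.
rewrite /Pd.
have -> : [exists q in infset Cd xi, ssval q.1 == None].
  apply: (proj2 (@ex_infb Cd _ (fun q => ssval q.1 == None))) => N.
  exists (N + n0); split; first exact: leq_addr.
  by rewrite rund1 -(cs1 MA MB 12 codes_g 0 outc_g Reset Let) addnC hcs.
rewrite acc_infset; suff -> : projB' (infset Cd xi) = infset MB eta by [].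
have P := @proj_inf MB Cd xi eta piB' n0 n0 1 (isT : 0 < 1).
apply/setP => a; rewrite inE.
have P' : (exists2 q, q \in infset Cd xi & piB' q = Some a) <-> a \in infset MB eta.
  apply: P => n Nn.
  by rewrite /piB' rund2 -(subnKC Nn) hcs divn1 addKn.
apply/exists_inP/idP.
- by case=> q qi /eqP h; apply/P'; exists q.
- by move/P' => [q qi h]; exists q => //; rewrite h.
Qed.

End DOT.

Lemma d_exh xi : ~ (exists eta, xi =1 g_code eta) -> ~ (exists eta, dot_case2 xi eta) -> False.
Proof.
move=> ha hb.
case: (classic (exists n, rs 12 codes_g 0 xi n = None)) => [hd | hal]; last first.
  have hal' : forall n, rs 12 codes_g 0 xi n <> None by move=> n e; apply: hal; exists n.
  have hbl : forall m, blk 12 xi m \in codes_g.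
    by move=> m; apply: (rs_alive_blocks HLg Hcg Hneg (hal' (m.+1 * 12))); rewrite mulnK.
  by apply: ha; eexists; rewrite {1}(blocks_g hbl).
have exP : exists n, (rs 12 codes_g 0 xi n == None) by case: hd => n e; exists n; rewrite e.
case: (ex_minnP exP) => n0 /eqP d0 min0.
have n0pos : 0 < n0 by case: n0 d0 {min0}.
have alive : forall n, n < n0 -> rs 12 codes_g 0 xi n <> None.
  by move=> n nn e; have := min0 n; rewrite e eqxx => /(_ isT); lia.
set m := n0.-1 %/ 12.
have m12 : m * 12 <= n0.-1 by rewrite /m leq_divM.
have [zeta hz] := alive_consistent (alive _ (ltn_pred n0pos)).
set u := mkseq zeta m.
set v := mkseq (fun t => xi (m * 12 + t)) (n0 - m * 12).
have gu : g_fin u = mkseq xi (m * 12).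
  rewrite g_fin_mkseq; apply: mkseq_ext => j jm; apply: hz; lia.
have wE : g_fin u ++ v = mkseq xi n0.
  by rewrite gu -mkseq_add subnKC //; lia.
apply: hb; exists (fun t => xi (n0 + t)); exists u, v; split.
- by rewrite -size_eq0 size_mkseq; apply/eqP; lia.
- move=> j; rewrite wE /prepend size_mkseq; case: ltnP => hj.
  + by rewrite nth_mkseq.
  + by rewrite subnKC.
- apply/(g_bad_iff (xi := xi)); rewrite ?wE ?size_mkseq //.
  by move=> j jn; rewrite nth_mkseq.
- move=> m' hm'; rewrite gu /v take_mkseq ?size_mkseq; last by move: hm'; rewrite size_mkseq; lia.
  rewrite -mkseq_add => hbad.
  have hlt : m * 12 + m' < n0 by move: hm'; rewrite size_mkseq; lia.
  have ag : forall j, j < size (mkseq xi (m * 12 + m')) -> xi j = nth false (mkseq xi (m * 12 + m')) j.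
    by move=> j; rewrite size_mkseq => jn; rewrite nth_mkseq.
  by have := proj1 (g_bad_iff ag) hbad; rewrite size_mkseq; apply: alive.
Qed.

Lemma dot_main k (A B : kpart k) (j : 'I_k) (MA MB : muller) :
  (forall eta, A eta = j <-> accepts MA eta) ->
  (forall eta, B eta = j <-> accepts MB eta) ->
  forall xi, dot_op A B xi = j <-> accepts (Cd MA MB) xi.
Proof.
move=> HA HB xi; rewrite accC /dot_op.
case: excluded_middle_informative => h1.
  case: (constructive_indefinite_description _ h1) => eta /= he.
  have -> : xi = g_code eta by apply: functional_extensionality.
  by rewrite HA; symmetry; apply: d_a.
case: excluded_middle_informative => h2.
  case: (constructive_indefinite_description _ h2) => eta /= he.
  by rewrite HB; symmetry; apply: d_b.
by exfalso; apply: (d_exh h1 h2).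
Qed.

Theorem lemma4p2 (k : nat) (hk : 2 <= k) :
  [/\ (forall (i : 'I_k) (A : kpart k), A_class A -> A_class (q_op i A)),
      (forall A B : kpart k, A_class A -> A_class B -> A_class (dot_op A B)),
      (forall (i : 'I_k) (A : kpart k), R_class A -> R_class (q_op i A))
    & (forall A B : kpart k, R_class A -> R_class B -> R_class (dot_op A B))].
Proof.
split.
- move=> i A HA j; have [M [apM HM]] := HA j.
  exists (Cq M (i == j)); split; last exact: q_main.
  exact: (Cap _ _ _ _ _ _ Dap_f apM apM).
- move=> A B HA HB j; have [MA [apA HMA]] := HA j; have [MB [apB HMB]] := HB j.
  exists (Cd MA MB); split; last exact: dot_main.
  exact: (Cap _ _ _ _ _ _ Dap_g apA apB).
- move=> i A HA j; have [M HM] := HA j.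
  by exists (Cq M (i == j)); apply: q_main.
- move=> A B HA HB j; have [MA HMA] := HA j; have [MB HMB] := HB j.
  by exists (Cd MA MB); apply: dot_main.
Qed.
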